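(* Every homothetic packing of $n\ge 3$ squares has at most $4n-8$ contacts.
   Context: Let $S=\{(x,y): -1\le x,y\le 1\}$. A homothetic packing of $n$ squares is a set $P=\{S_1,\ldots,S_n\}$ with $S_i=r_iS+p_i$, $r_i>0$, $p_i\in\mathbb{R}^2$, such that distinct squares have disjoint interiors. A contact is an unordered pair $\{i,j\}$, $i\ne j$, with $S_i\cap S_j\neq\emptyset$. *)

(* Defs.v *)
From HB Require Import structures.
From mathcomp Require Import all_boot all_order all_algebra.
From mathcomp Require Import boolp reals.
Set Implicit Arguments. Unset Strict Implicit. Unset Printing Implicit Defensive.
Import Order.TTheory GRing.Theory Num.Theory.
Local Open Scope ring_scope.

(* The square r S + p, where S = [-1,1]^2: closed square of centre p, half-side r. *)
Definition in_square (R : realType) (r : R) (p : R * R) (z : R * R) : Prop :=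
  `|z.1 - p.1| <= r /\ `|z.2 - p.2| <= r.

Definition in_square_int (R : realType) (r : R) (p : R * R) (z : R * R) : Prop :=
  `|z.1 - p.1| < r /\ `|z.2 - p.2| < r.

Definition homothetic_packing (R : realType) (n : nat)
    (r : 'I_n -> R) (p : 'I_n -> R * R) : Prop :=
  (forall i, 0 < r i) /\
  (forall i j, i != j -> forall z,
      ~ (in_square_int (r i) (p i) z /\ in_square_int (r j) (p j) z)).

Definition contact (R : realType) (n : nat)
    (r : 'I_n -> R) (p : 'I_n -> R * R) (i j : 'I_n) : Prop :=
  i != j /\ exists z, in_square (r i) (p i) z /\ in_square (r j) (p j) z.

Definition num_contacts (R : realType) (n : nat)
    (r : 'I_n -> R) (p : 'I_n -> R * R) : nat :=
  #|[set ij : 'I_n * 'I_n | (ij.1 < ij.2)%N && `[< contact r p ij.1 ij.2 >]]|.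

(* Main.v *)
Require Import Defs.
From HB Require Import structures.
From mathcomp Require Import all_boot all_order all_algebra.
From mathcomp Require Import boolp reals lra zify.
Set Implicit Arguments. Unset Strict Implicit. Unset Printing Implicit Defensive.
Import Order.TTheory GRing.Theory Num.Theory.
Local Open Scope ring_scope.


Lemma argmax_ex' (R : realType) (T : finType) (P : pred T) (F : T -> R) :
  (exists x, P x) -> exists x, P x /\ forall y, P y -> F y <= F x.
Proof.
case=> x0 px0; case: (@arg_maxP _ _ T x0 P F px0) => x px hx.
by exists x; split.
Qed.

Lemma four_free (R : realType) (n : nat) (lo hi : 'I_n -> R) (kL kH : bool * bool)
  (G : pred ('I_n * (bool * bool))) :
  (2 < n)%N -> kL != kH -> (forall k, lo k < hi k) ->
  (forall k, (forall k', lo k <= lo k') -> G (k, kL)) ->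
  (forall k, (forall k', hi k' <= hi k) -> G (k, kH)) ->
  (forall c, (exists k, lo k = c \/ hi k = c) ->
     exists k, (lo k = c /\ G (k, kL)) \/ (hi k = c /\ G (k, kH))) ->
  exists l : seq ('I_n * (bool * bool)),
    [/\ size l = 4, uniq l, all G l & all (fun s => s.2 \in [:: kL; kH]) l].
Proof.
move=> n2 kLH hlohi hmin hmax hsig.
have n0 : (0 < n)%N by apply: leq_ltn_trans n2.
have n1 : (1 < n)%N by apply: leq_ltn_trans n2.
pose i0 := Ordinal n0; pose i1 := Ordinal n1; pose i2 := Ordinal n2.
have [a [_ ha]] : exists x, true /\ forall y, true -> - lo y <= - lo x.
  by apply: (argmax_ex' (P := xpredT)); exists i0.
have [b [_ hb]] : exists x, true /\ forall y, true -> hi y <= hi x.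
  by apply: (argmax_ex' (P := xpredT)); exists i0.
have ha' : forall y, lo a <= lo y by move=> y; move: (ha y isT); lra.
have hb' : forall y, hi y <= hi b by move=> y; exact: hb.
set x0 := lo a; set x1 := hi b.
pose sv (s : 'I_n * (bool * bool)) := if s.2 == kL then lo s.1 else hi s.1.
have svL k : sv (k, kL) = lo k by rewrite /sv eqxx.
have svH k : sv (k, kH) = hi k by rewrite /sv eq_sym (negbTE kLH).
have hx01 : x0 < x1 by move: (hlohi a) (hb' a); rewrite /x0 /x1; lra.
have sig' c : (exists k, lo k = c \/ hi k = c) ->
    exists s, [/\ G s, sv s = c & s.2 \in [:: kL; kH]].
  move=> /hsig [k [[h1 h2]|[h1 h2]]].
  - by exists (k, kL); rewrite svL h1 !inE eqxx.
  - by exists (k, kH); rewrite svH h1 !inE eqxx orbT.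
have uniq_sv (l : seq ('I_n * (bool * bool))) : uniq (map sv l) -> uniq l.
  exact: map_uniq.
case: (pselect (exists c1 c2, [/\ (exists k, lo k = c1 \/ hi k = c1),
          (exists k, lo k = c2 \/ hi k = c2), c1 != x0, c1 != x1 &
          [/\ c2 != x0, c2 != x1 & c1 != c2]])).
- move=> [c1 [c2 [l1 l2 n10 n11 [n20 n21 n12]]]].
  case: (sig' _ l1) => s1 [g1 v1 k1]; case: (sig' _ l2) => s2 [g2 v2 k2].
  exists [:: (a, kL); (b, kH); s1; s2]; split => //.
  + apply: uniq_sv; rewrite /= svL svH v1 v2 !inE !negb_or.
    rewrite -/x0 -/x1 (lt_eqF hx01) ![x0 == _]eq_sym ![x1 == _]eq_sym n10 n11 n20 n21 n12.
    by [].
  + by rewrite /= g1 g2 hmin // hmax.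
  + by rewrite /= k1 k2 !inE !eqxx orbT.
- move=> hA.
  have hB k : lo k = x0 \/ hi k = x1.
    case: (pselect (lo k = x0)) => [|h0]; first by left.
    case: (pselect (hi k = x1)) => [|h1]; first by right.
    exfalso; apply: hA; exists (lo k), (hi k); split.
    + by exists k; left.
    + by exists k; right.
    + exact/eqP.
    + by apply/eqP; move: (hlohi k) (hb' k); rewrite /x1; lra.
    + split.
      * by apply/eqP; move: (hlohi k) (ha' k); rewrite /x0; lra.
      * exact/eqP.
      * by apply/eqP; move: (hlohi k); lra.
  pose f k := if lo k == x0 then (k, kL) else (k, kH).
  have fG k : G (f k).
    rewrite /f; case: eqP => h.
    - by apply: hmin => k'; rewrite h.
    - case: (hB k) => // h1; apply: hmax => k'; rewrite h1; exact: hb'.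
  have fv k : (sv (f k) == x0) || (sv (f k) == x1).
    rewrite /f; case: ifP => /eqP h; first by rewrite svL h eqxx.
    by case: (hB k) => // h1; rewrite svH h1 eqxx orbT.
  have fk k : f k \in [:: (k, kL); (k, kH)].
    by rewrite /f; case: ifP; rewrite !inE eqxx ?orbT.
  have f1 k : (f k).1 = k by rewrite /f; case: ifP.
  case: (pselect (exists c, [/\ (exists k, lo k = c \/ hi k = c), c != x0 & c != x1])).
  + move=> [c [lc c0 c1]]; case: (sig' _ lc) => s [gs vs ks].
    exists [:: f i0; f i1; f i2; s]; split => //.
    * rewrite /= !inE !negb_or.
      have ne k : s != f k.
        apply/negP => /eqP e; move: (fv k); rewrite -e vs.
        by rewrite (negbTE c0) (negbTE c1).
      have nf (k k' : 'I_n) : k != k' -> f k != f k'.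
        by move=> kk; apply/negP => /eqP e; move: (f1 k); rewrite e f1 => ee; rewrite ee eqxx in kk.
      by rewrite !nf // ![f _ == s]eq_sym !ne.
    * by rewrite /= !fG gs.
    * rewrite /= ks andbT.
      by move: (fk i0) (fk i1) (fk i2); rewrite !inE => /orP [] /eqP -> /orP [] /eqP -> /orP [] /eqP ->;
         rewrite /= !eqxx ?orbT.
  + move=> hno.
    have hall k : lo k = x0 /\ hi k = x1.
      have lk : lo k = x0.
        case: (hB k) => // h1.
        apply: contra_notP hno => h; exists (lo k); split.
        - by exists k; left.
        - exact/eqP.
        - by apply/eqP; move: (hlohi k); rewrite -h1; lra.
      split => //; case: (hB k) => // h1.
      apply: contra_notP hno => h; exists (hi k); split.
      - by exists k; right.
      - by apply/eqP; move: (hlohi k); rewrite -h1; lra.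
      - exact/eqP.
    exists [:: (i0, kL); (i1, kL); (i2, kL); (i0, kH)]; split => //.
    * rewrite /= !inE !xpair_eqE /=.
      by rewrite kLH.
    * have gL k : G (k, kL) by apply: hmin => k'; rewrite !(proj1 (hall _)).
      have gH k : G (k, kH) by apply: hmax => k'; rewrite !(proj2 (hall _)).
      by rewrite /= !gL gH.
    * by rewrite /= !inE !eqxx ?orbT.
Qed.

Section Main.
Variable R : realType.
Variable n : nat.
Variable r : 'I_n -> R.
Variable p : 'I_n -> R * R.
Hypothesis rpos : forall i, 0 < r i.

Local Notation X k := (p k).1.
Local Notation Y k := (p k).2.

Hypothesis sep : forall i j, i != j ->
  r i + r j <= X j - X i \/ r i + r j <= X i - X j \/
  r i + r j <= Y j - Y i \/ r i + r j <= Y i - Y j.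

Definition Vc i j : bool := [&& X j - X i == r i + r j, Y j - Y i <= r i + r j & Y i - Y j <= r i + r j].
Definition Hc i j : bool := [&& Y j - Y i == r i + r j, X j - X i < r i + r j & X i - X j < r i + r j].
Definition J1 i : bool := [exists k, (X k - r k == X i + r i) && (Y k - r k == Y i + r i)].
Definition I2 i : bool := [exists k, (X k + r k == X i + r i) && (Y k - r k == Y i + r i)].

Definition k0 : bool * bool := (false, false).
Definition k1 : bool * bool := (false, true).
Definition k2 : bool * bool := (true, false).
Definition k3 : bool * bool := (true, true).

Definition phiV i j : 'I_n * (bool * bool) :=
  if Y i + r i < Y j + r j then (i, k1)
  else if Y j + r j < Y i + r i then (j, k0)
  else if J1 i && I2 i then (i, k2)
  else if J1 i then (j, k0) else (i, k1).
Definition phiH i j : 'I_n * (bool * bool) :=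
  if X i + r i < X j + r j then (i, k2) else (j, k3).
Definition Psi (e : 'I_n * 'I_n * bool) :=
  if e.2 then phiV e.1.1 e.1.2 else phiH e.1.1 e.1.2.
Definition inD (e : 'I_n * 'I_n * bool) : bool :=
  if e.2 then Vc e.1.1 e.1.2 else Hc e.1.1 e.1.2.

Lemma VcP i j : Vc i j ->
  [/\ X j - X i = r i + r j, Y j - Y i <= r i + r j & Y i - Y j <= r i + r j].
Proof. by case/and3P => /eqP. Qed.
Lemma HcP i j : Hc i j ->
  [/\ Y j - Y i = r i + r j, X j - X i < r i + r j & X i - X j < r i + r j].
Proof. by case/and3P => /eqP. Qed.

Lemma nlt (a b : R) : (a < b) = false -> b <= a.
Proof. by move/negbT; rewrite -leNgt. Qed.

Lemma pre0 i j b k : inD (i, j, b) -> Psi (i, j, b) = (k, k0) ->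
  [/\ b = true, j = k & (Y k + r k < Y i + r i \/
     (Y i + r i = Y k + r k /\ J1 i /\ ~~ I2 i))].
Proof.
rewrite /Psi /inD; case: b => /=; rewrite ?/phiV ?/phiH.
- move=> _; case: ifP => h1; first by case.
  case: ifP => h2; first by case=> <-; split=> //; left.
  case: ifP => h3; first by case.
  case: ifP => h4; last by case.
  case=> <-; split=> //; right; split; first by move: (nlt h1) (nlt h2); lra.
  by move: h3; rewrite h4 /= => ->.
- by move=> _; case: ifP.
Qed.

Lemma pre1 i j b k : inD (i, j, b) -> Psi (i, j, b) = (k, k1) ->
  [/\ b = true, i = k & (Y k + r k < Y j + r j \/
     (Y k + r k = Y j + r j /\ ~~ J1 k))].
Proof.
rewrite /Psi /inD; case: b => /=; rewrite ?/phiV ?/phiH.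
- move=> _; case: ifP => h1; first by case=> <-; split=> //; left.
  case: ifP => h2; first by case.
  case: ifP => h3; first by case.
  case: ifP => h4; first by case.
  case=> <-; split=> //; right; split; first by move: (nlt h1) (nlt h2); lra.
  by rewrite h4.
- by move=> _; case: ifP.
Qed.

Lemma pre2 i j b k : inD (i, j, b) -> Psi (i, j, b) = (k, k2) ->
  i = k /\ ((b = true /\ Y k + r k = Y j + r j /\ J1 k /\ I2 k) \/
            (b = false /\ X k + r k < X j + r j)).
Proof.
rewrite /Psi /inD; case: b => /=; rewrite ?/phiV ?/phiH.
- move=> _; case: ifP => h1; first by case.
  case: ifP => h2; first by case.
  case: ifP => h3; last by case: ifP.
  case=> <-; split=> //; left; split=> //; split; first by move: (nlt h1) (nlt h2); lra.
  by case/andP: h3.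
- by move=> _; case: ifP => h; case=> <-; split=> //; right.
Qed.

Lemma pre3 i j b k : inD (i, j, b) -> Psi (i, j, b) = (k, k3) ->
  [/\ b = false, j = k & X k + r k <= X i + r i].
Proof.
rewrite /Psi /inD; case: b => /=; rewrite ?/phiV ?/phiH.
- move=> _; case: ifP => h1; first by case.
  case: ifP => h2; first by case.
  case: ifP => h3; first by case.
  by case: ifP.
- by move=> _; case: ifP => h; case=> // <-; split=> //; apply: nlt.
Qed.


Lemma ltne (a b : R) : a != b -> a <= b -> a < b.
Proof. by move=> h1 h2; rewrite lt_neqAle h1 h2. Qed.

Lemma noI2 i i' : ~~ I2 i' -> X i + r i = X i' + r i' -> Y i - r i != Y i' + r i'.
Proof.
move=> hn hx; apply/negP => /eqP hy; move/negP: hn; apply; apply/existsP; exists i.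
by rewrite hx hy !eqxx.
Qed.

Lemma noJ1 i j : ~~ J1 i -> X j - r j = X i + r i -> Y j - r j != Y i + r i.
Proof.
move=> hn hx; apply/negP => /eqP hy; move/negP: hn; apply; apply/existsP; exists j.
by rewrite hx hy !eqxx.
Qed.

Ltac sepl a b := let H := fresh in case: (eqVneq a b) => [->|H];
  [idtac | exfalso; move: (sep H) (rpos a) (rpos b); lra].

Lemma Psi_inj e e' : inD e -> inD e' -> Psi e = Psi e' -> e = e'.
Proof.
case: e => [[i j] b]; case: e' => [[i' j'] b'] He He' E.
case Es: (Psi (i, j, b)) => [k [[] []]]; move: (Es); rewrite E => Es'.
-
  case: (pre3 He Es) => hb hj hr; case: (pre3 He' Es') => hb' hj' hr'.
  subst b b' j j'. move: He He'; rewrite /inD /= => /HcP [h1 h2 h3] /HcP [h1' h2' h3'].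
  by sepl i i'.
-
  case: (pre2 He Es) => hi [[hb [ht [hj1 hi2]]] | [hb hr]];
  case: (pre2 He' Es') => hi' [[hb' [ht' [hj1' hi2']]] | [hb' hr']];
  subst i i' b b'; move: He He'; rewrite /inD /=.
  + move=> /VcP [h1 h2 h3] /VcP [h1' h2' h3']. by sepl j j'.
  + move=> /VcP [h1 h2 h3] /HcP [h1' h2' h3']; exfalso.
    case/existsP: hj1 => c /andP [/eqP c1 /eqP c2].
    case: (eqVneq c j') => [ec|hc]; first by subst c; move: (rpos k) (rpos j'); lra.
    by move: (sep hc) (rpos c) (rpos j') (rpos k); lra.
  + move=> /HcP [h1 h2 h3] /VcP [h1' h2' h3']; exfalso.
    case/existsP: hj1' => c /andP [/eqP c1 /eqP c2].
    case: (eqVneq c j) => [ec|hc]; first by subst c; move: (rpos k) (rpos j); lra.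
    by move: (sep hc) (rpos c) (rpos j) (rpos k); lra.
  + move=> /HcP [h1 h2 h3] /HcP [h1' h2' h3']. by sepl j j'.
-
  case: (pre1 He Es) => hb hi hc; case: (pre1 He' Es') => hb' hi' hc'.
  subst b b' i i'. move: He He'; rewrite /inD /= => /VcP [h1 h2 h3] /VcP [h1' h2' h3'].
  case: hc => [hc|[hc hnj]]; case: hc' => [hc'|[hc' hnj']].
  + by sepl j j'.
  + have hne := noJ1 hnj' (_ : X j - r j = X k + r k).
    have hlt : Y j - r j < Y k + r k by apply: ltne; [apply: hne; lra | lra].
    by sepl j j'.
  + have hne := noJ1 hnj (_ : X j' - r j' = X k + r k).
    have hlt : Y j' - r j' < Y k + r k by apply: ltne; [apply: hne; lra | lra].
    by sepl j j'.
  + by sepl j j'.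
-
  case: (pre0 He Es) => hb hj hc; case: (pre0 He' Es') => hb' hj' hc'.
  subst b b' j j'. move: He He'; rewrite /inD /= => /VcP [h1 h2 h3] /VcP [h1' h2' h3'].
  case: hc => [hc|[hc [hj hni]]]; case: hc' => [hc'|[hc' [hj' hni']]].
  + by sepl i i'.
  + have hne := noI2 (i := i) hni' (_ : X i + r i = X i' + r i').
    have hlt : Y i - r i < Y i' + r i' by apply: ltne; [apply: hne; lra | lra].
    by sepl i i'.
  + have hne := noI2 (i := i') hni (_ : X i' + r i' = X i + r i).
    have hlt : Y i' - r i' < Y i + r i by apply: ltne; [apply: hne; lra | lra].
    by sepl i i'.
  + by sepl i i'.
Qed.

Definition Dset := [set e | inD e].
Definition Img := Psi @: Dset.
Definition Fr (s : 'I_n * (bool * bool)) : bool := s \notin Img.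

Lemma FrP s : (forall e, inD e -> Psi e = s -> False) -> Fr s.
Proof.
move=> h; apply/imsetP => [[e]]; rewrite inE => he es; exact: h he (esym es).
Qed.

Lemma FV1 k : (forall k', X k - r k <= X k' - r k') -> Fr (k, k0).
Proof.
move=> hm; apply: FrP => [[[i j] b]] he es; case: (pre0 he es) => hb hj _.
subst b j; move: he; rewrite /inD /= => /VcP [h1 h2 h3].
by move: (hm i) (rpos i); lra.
Qed.

Lemma FV2 k : (forall k', X k' + r k' <= X k + r k) -> Fr (k, k1).
Proof.
move=> hm; apply: FrP => [[[i j] b]] he es; case: (pre1 he es) => hb hi _.
subst b i; move: he; rewrite /inD /= => /VcP [h1 h2 h3].
by move: (hm j) (rpos j); lra.
Qed.

Lemma FH1 k : (forall k', Y k - r k <= Y k' - r k') -> Fr (k, k3).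
Proof.
move=> hm; apply: FrP => [[[i j] b]] he es; case: (pre3 he es) => hb hj _.
subst b j; move: he; rewrite /inD /= => /HcP [h1 h2 h3].
by move: (hm i) (rpos i); lra.
Qed.

Lemma FH2 k : (forall k', Y k' + r k' <= Y k + r k) -> Fr (k, k2).
Proof.
move=> hm; apply: FrP => [[[i j] b]] he es; case: (pre2 he es) => hi [[hb [ht [hj1 hi2]]]|[hb hr]].
- subst i; case/existsP: hi2 => c /andP [_ /eqP c2].
  by move: (hm c) (rpos c); lra.
- subst b i; move: he; rewrite /inD /= => /HcP [h1 h2 h3].
  by move: (hm j) (rpos j); lra.
Qed.

Lemma argmax_ex (T : finType) (P : pred T) (F : T -> R) :
  (exists x, P x) -> exists x, P x /\ forall y, P y -> F y <= F x.
Proof.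
case=> x0 px0; case: (@arg_maxP _ _ T x0 P F px0) => x px hx.
by exists x; split.
Qed.

Lemma FVs c : (exists k, X k - r k = c \/ X k + r k = c) ->
  exists k, (X k - r k = c /\ Fr (k, k0)) \/ (X k + r k = c /\ Fr (k, k1)).
Proof.
move=> [k0' hk0].
pose P := fun s : 'I_n * bool => (if s.2 then X s.1 + r s.1 else X s.1 - r s.1) == c.
pose F := fun s : 'I_n * bool => Y s.1 + r s.1.
have [[km bm] [pm hm]] : exists x, P x /\ forall y, P y -> F y <= F x.
  apply: argmax_ex; case: hk0 => h; [exists (k0', false) | exists (k0', true)];
  by rewrite /P /= h.
rewrite /P /F /= in pm hm.
case: (pselect (exists k, X k - r k = c /\ Y k + r k = Y km + r km)) => [[k [hk1 hk2]]|hno].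
- exists k; left; split => //; apply: FrP => [[[i j] b]] he es.
  case: (pre0 he es) => hb hj [hc|[hc [hj1 hi2]]]; subst b j;
    move: he; rewrite /inD /= => /VcP [h1 h2 h3].
  + have : Y i + r i <= Y km + r km by apply: (hm (i, true)); apply/eqP; lra.
    lra.
  + case/existsP: hj1 => d /andP [/eqP d1 /eqP d2].
    have : Y d + r d <= Y km + r km by apply: (hm (d, false)); apply/eqP; lra.
    move: (rpos d); lra.
- have bmT : bm = true.
    case: bm pm hm => //= pm hm; exfalso; apply: hno; exists km; split => //; exact/eqP.
  subst bm; exists km; right; split; first exact/eqP.
  apply: FrP => [[[i j] b]] he es.
  case: (pre1 he es) => hb hi hc; subst b i;
    move: he; rewrite /inD /= => /VcP [h1 h2 h3].
  have hj : Y j + r j <= Y km + r km by apply: (hm (j, false)); apply/eqP; lra.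
  case: hc => [hc|[hc hnj]]; first lra.
  apply: hno; exists j; split; lra.
Qed.

Lemma FHs c : (exists k, Y k - r k = c \/ Y k + r k = c) ->
  exists k, (Y k - r k = c /\ Fr (k, k3)) \/ (Y k + r k = c /\ Fr (k, k2)).
Proof.
move=> [k0' hk0].
pose P := fun s : 'I_n * bool => (if s.2 then Y s.1 + r s.1 else Y s.1 - r s.1) == c.
pose F := fun s : 'I_n * bool => X s.1 + r s.1.
have [[km bm] [pm hm]] : exists x, P x /\ forall y, P y -> F y <= F x.
  apply: argmax_ex; case: hk0 => h; [exists (k0', false) | exists (k0', true)];
  by rewrite /P /= h.
rewrite /P /F /= in pm hm.
case: (pselect (exists k, Y k + r k = c /\ X k + r k = X km + r km)) => [[k [hk1 hk2]]|hno].
- exists k; right; split => //; apply: FrP => [[[i j] b]] he es.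
  case: (pre2 he es) => hi [[hb [ht [hj1 hi2]]]|[hb hr]]; subst i.
  + case/existsP: hj1 => d /andP [/eqP d1 /eqP d2].
    have : X d + r d <= X km + r km by apply: (hm (d, false)); apply/eqP; lra.
    move: (rpos d); lra.
  + subst b; move: he; rewrite /inD /= => /HcP [h1 h2 h3].
    have : X j + r j <= X km + r km by apply: (hm (j, false)); apply/eqP; lra.
    lra.
- have bmF : bm = false.
    case: bm pm hm => //= pm hm; exfalso; apply: hno; exists km; split => //; exact/eqP.
  subst bm; exists km; left; split; first exact/eqP.
  apply: FrP => [[[i j] b]] he es.
  case: (pre3 he es) => hb hj hc; subst b j;
    move: he; rewrite /inD /= => /HcP [h1 h2 h3].
  have hi : X i + r i <= X km + r km by apply: (hm (i, true)); apply/eqP; lra.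
  apply: hno; exists i; split; lra.
Qed.

Lemma classify i j : i != j ->
  X j - X i <= r i + r j -> X i - X j <= r i + r j ->
  Y j - Y i <= r i + r j -> Y i - Y j <= r i + r j ->
  [|| Vc i j, Vc j i, Hc i j | Hc j i].
Proof.
move=> hij a1 a2 a3 a4; move: (sep hij) (rpos i) (rpos j) => hs ri rj.
have vij : X j - X i = r i + r j -> Vc i j.
  by move=> h; apply/and3P; split=> //; apply/eqP.
have vji : X i - X j = r j + r i -> Vc j i.
  by move=> h; apply/and3P; split => //; [apply/eqP | lra | lra].
case: (lerP (r i + r j) (X j - X i)) => b1.
  by rewrite vij //; lra.
case: (lerP (r i + r j) (X i - X j)) => b2.
  by rewrite vji ?orbT //; lra.
case: (lerP (r i + r j) (Y j - Y i)) => b3.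
  have : Hc i j by apply/and3P; split => //; apply/eqP; lra.
  by move=> ->; rewrite !orbT.
case: (lerP (r i + r j) (Y i - Y j)) => b4.
  have : Hc j i by apply/and3P; split => //; [apply/eqP; lra | lra | lra].
  by move=> ->; rewrite !orbT.
exfalso; lra.
Qed.

Lemma card_bound : (2 < n)%N -> (#|Dset| <= 4 * n - 8)%N.
Proof.
move=> n2.
have hinj : {in Dset &, injective Psi}.
  by move=> e e'; rewrite !inE => he he'; apply: Psi_inj.
have cI : #|Img| = #|Dset| by rewrite /Img card_in_imset.
have cT : (#|Img| + #|~: Img| = n * 4)%N.
  by rewrite cardsC card_prod card_ord card_prod card_bool.
have hlhX k : X k - r k < X k + r k by move: (rpos k); lra.
have hlhY k : Y k - r k < Y k + r k by move: (rpos k); lra.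
have [lV [sV uV fV kV]] := four_free (lo := fun k => X k - r k) (hi := fun k => X k + r k)
   (kL := k0) (kH := k1) (G := Fr) n2 isT
   hlhX
   (fun k h => FV1 h) (fun k h => FV2 h) FVs.
have [lH [sH uH fH kH]] := four_free (lo := fun k => Y k - r k) (hi := fun k => Y k + r k)
   (kL := k3) (kH := k2) (G := Fr) n2 isT
   hlhY
   (fun k h => FH1 h) (fun k h => FH2 h) FHs.
have u : uniq (lV ++ lH).
  rewrite cat_uniq uV uH andbT /=; apply/hasPn => s sH0.
  apply/negP => sV'.
  move/allP: kV => /(_ s sV'); move/allP: kH => /(_ s sH0).
  by rewrite !inE; case: s {sH0 sV'} => ? [[] []].
have c8 : (8 <= #|~: Img|)%N.
  have -> : 8%N = size (lV ++ lH) by rewrite size_cat sV sH.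
  rewrite -(card_uniqP u); apply: subset_leq_card; apply/subsetP => s.
  rewrite mem_cat inE => /orP [] hs.
  - by move/allP: fV => /(_ s hs).
  - by move/allP: fH => /(_ s hs).
rewrite -cI; lia.
Qed.

End Main.

Lemma inter_open (R : realType) (a1 b1 a2 b2 : R) :
  a1 < b1 -> a2 < b2 -> a1 < b2 -> a2 < b1 ->
  exists z, [/\ a1 < z, z < b1, a2 < z & z < b2].
Proof.
move=> h1 h2 h3 h4.
case: (lerP a1 a2) => c1; case: (lerP b1 b2) => c2.
- by exists ((a2 + b1) / 2); split; lra.
- by exists ((a2 + b2) / 2); split; lra.
- by exists ((a1 + b1) / 2); split; lra.
- by exists ((a1 + b2) / 2); split; lra.
Qed.

Theorem proposition13 (R : realType) (n : nat)
    (r : 'I_n -> R) (p : 'I_n -> R * R) :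
  (3 <= n)%N -> homothetic_packing r p ->
  (num_contacts r p <= 4 * n - 8)%N.
Proof.
move=> n3 [rpos hdisj].
have sep : forall i j, i != j ->
  r i + r j <= (p j).1 - (p i).1 \/ r i + r j <= (p i).1 - (p j).1 \/
  r i + r j <= (p j).2 - (p i).2 \/ r i + r j <= (p i).2 - (p j).2.
  move=> i j hij; case: (pselect (r i + r j <= (p j).1 - (p i).1 \/ r i + r j <= (p i).1 - (p j).1 \/
  r i + r j <= (p j).2 - (p i).2 \/ r i + r j <= (p i).2 - (p j).2)) => // hn; exfalso.
  have a1 : (p j).1 - (p i).1 < r i + r j by rewrite ltNge; apply/negP => h; apply: hn; left.
  have a2 : (p i).1 - (p j).1 < r i + r j by rewrite ltNge; apply/negP => h; apply: hn; right; left.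
  have a3 : (p j).2 - (p i).2 < r i + r j by rewrite ltNge; apply/negP => h; apply: hn; right; right; left.
  have a4 : (p i).2 - (p j).2 < r i + r j by rewrite ltNge; apply/negP => h; apply: hn; right; right; right.
  move: (rpos i) (rpos j) => ri rj.
  have [zx [x1 x2 x3 x4]] := @inter_open R ((p i).1 - r i) ((p i).1 + r i) ((p j).1 - r j) ((p j).1 + r j)
    ltac:(lra) ltac:(lra) ltac:(lra) ltac:(lra).
  have [zy [y1 y2 y3 y4]] := @inter_open R ((p i).2 - r i) ((p i).2 + r i) ((p j).2 - r j) ((p j).2 + r j)
    ltac:(lra) ltac:(lra) ltac:(lra) ltac:(lra).
  apply: (hdisj i j hij (zx, zy)); rewrite /in_square_int /= !ltr_norml.
  by split; split; apply/andP; split; lra.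
have main := card_bound rpos sep n3.
apply: leq_trans main.
rewrite /num_contacts.
set C := [set ij : 'I_n * 'I_n | _].
pose g := fun ij : 'I_n * 'I_n =>
  if Vc r p ij.1 ij.2 then (ij.1, ij.2, true)
  else if Vc r p ij.2 ij.1 then (ij.2, ij.1, true)
  else if Hc r p ij.1 ij.2 then (ij.1, ij.2, false) else (ij.2, ij.1, false).
have g1 ij : (g ij).1 = ij \/ (g ij).1 = (ij.2, ij.1).
  by case: ij => i j; rewrite /g /=; case: ifP => _; [left|case: ifP => _; [right|case: ifP => _; [left|right]]].
have gD ij : ij \in C -> g ij \in Dset r p.
  case: ij => i j; rewrite !inE /= => /andP [lt /asboolP [hij [z [[hi1 hi2] [hj1 hj2]]]]].
  move: hi1 hi2 hj1 hj2; rewrite !ler_norml => /andP [b1 b2] /andP [b3 b4] /andP [b5 b6] /andP [b7 b8].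
  have := classify rpos sep hij; rewrite /g /=.
  move=> /(_ ltac:(lra) ltac:(lra) ltac:(lra) ltac:(lra)).
  rewrite /Dset; case: ifP => h1; first by rewrite /inD /= h1.
  case: ifP => h2; first by rewrite /inD /= h2.
  case: ifP => h3; first by rewrite /inD /= h3.
  by move=> /= h4; rewrite /inD /= h4.
have ginj : {in C &, injective g}.
  move=> [i j] [i' j']; rewrite !inE /= => /andP [lt _] /andP [lt' _] E.
  have h := g1 (i, j); have h' := g1 (i', j'); rewrite E in h.
  case: h' => h'; case: h => h; rewrite h' in h; case: h => e1 e2; subst => //.
  - by move: (ltn_trans lt lt'); rewrite ltnn.
  - by move: (ltn_trans lt lt'); rewrite ltnn.
rewrite -(card_in_imset ginj); apply: subset_leq_card; apply/subsetP => x /imsetP [ij hij ->].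
exact: gD.
Qed.
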